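(* Let $f:\mathbb{R}^n\to\mathbb{R}$ be bounded below by $f_{\mathrm{low}}$ and continuously differentiable with $\nabla f$ Lipschitz continuous with constant $L_{\nabla f}$. Run the algorithm described in the context, and suppose that (i) at every iteration $k$ the model $m_k$ is fully linear in $B(x_k,\Delta_k)$ with constants $\kappa_{\mathrm{mf}},\kappa_{\mathrm{mg}}>0$ independent of $k$, and $\|H_k\|\le \kappa_H-1$ for some $\kappa_H\ge 1$ independent of $k$; (ii) at every iteration the step satisfies $\|s_k\|\le\Delta_k$ and $m_k(x_k)-m_k(x_k+s_k)\ge \kappa_s\|g_k\|\min\left(\Delta_k,\frac{\|g_k\|}{\|H_k\|+1}\right)$ for some $\kappa_s\in(0,\tfrac12)$. Let $\epsilon>0$. If $\|\nabla f(x_k)\|\ge\epsilon$ for all $k=0,\ldots,K-1$, then $$K\le \frac{\log(\Delta_0/\Delta_{\min}(\epsilon))}{\log(\gamma_{\mathrm{dec}}^{-1})}+\left(1+\frac{\log(\gamma_{\mathrm{inc}})}{\log(\gamma_{\mathrm{dec}}^{-1})}\right)\frac{(1+\kappa_{\mathrm{mg}}\mu_c^{-1})[f(x_0)-f_{\mathrm{low}}]}{\eta_U\kappa_s\epsilon\Delta_{\min}(\epsilon)},$$ where $$\Delta_{\min}(\epsilon):=\min\left(\Delta_0,\ \frac{\gamma_{\mathrm{dec}}\epsilon}{\max\left(\frac{2\kappa_{\mathrm{mf}}}{\kappa_s(1-\eta_S)},\kappa_H,\mu_c\right)+\kappa_{\mathrm{mg}}},\ \frac{\epsilon}{(1+\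kappa_{\mathrm{mg}}\mu_c^{-1})\kappa_H}\right).$$
   Context: Norms are Euclidean (operator 2-norm for matrices); $B(x,\Delta)=\{y:\|y-x\|\le\Delta\}$. A model $m:\mathbb{R}^n\to\mathbb{R}$ is fully linear in $B(x,\Delta)$ with constants $\kappa_{\mathrm{mf}},\kappa_{\mathrm{mg}}>0$ if $|m(y)-f(y)|\le\kappa_{\mathrm{mf}}\Delta^2$ and $\|\nabla m(y)-\nabla f(y)\|\le\kappa_{\mathrm{mg}}\Delta$ for all $y\in B(x,\Delta)$. Algorithm: inputs $x_0\in\mathbb{R}^n$, $\Delta_0>0$, parameters $0<\gamma_{\mathrm{dec}}<1<\gamma_{\mathrm{inc}}$, $0<\eta_U\le\eta_S<1$, $\mu_c>0$. For $k=0,1,2,\ldots$: build a quadratic model $m_k(y)=c_k+g_k^T(y-x_k)+\tfrac12(y-x_k)^TH_k(y-x_k)$ ($H_k$ symmetric); compute a step $s_k$ (approximately minimizing $m_k(x_k+s)$ over $\|s\|\le\Delta_k$); evaluate $f(x_k+s_k)$ and $\rho_k=\frac{f(x_k)-f(x_k+s_k)}{m_k(x_k)-m_k(x_k+s_k)}$. If $\rho_k\ge\eta_S$ and $\|g_k\|\ge\mu_c\Delta_k$ (very successful): $x_{k+1}=x_k+s_k$, $\Delta_{k+1}=\gamma_{\mathrm{inc}}\Delta_k$. Else if $\eta_U\le\rho_k<\eta_S$ and $\|g_k\|\ge\mu_c\Delta_k$ (successful): $x_{k+1}=x_k+s_k$, $\Delta_{k+1}=\Delta_k$. Otherwise (unsuccessful):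 $x_{k+1}=x_k$, $\Delta_{k+1}=\gamma_{\mathrm{dec}}\Delta_k$. *)

(* Defs.v *)
From HB Require Import structures.
From mathcomp Require Import all_boot all_order all_algebra.
From mathcomp Require Import all_classical all_reals all_analysis.
Set Implicit Arguments. Unset Strict Implicit. Unset Printing Implicit Defensive.
Import Order.TTheory GRing.Theory Num.Theory.
Local Open Scope ring_scope.
Local Open Scope classical_set_scope.

Section TR.
Variables (R : realType) (n : nat).
Notation vec := 'cV[R]_n.

Definition dotv (u v : vec) : R := (u^T *m v) 0 0.
Definition enorm (v : vec) : R := Num.sqrt (dotv v v).

Definition opnorm (A : 'M[R]_n) : R :=
  sup [set enorm (A *m v) | v in [set v : vec | enorm v <= 1]].

Definition is_gradient (f : vec -> R) (x g : vec) : Prop :=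
  forall e : R, 0 < e -> exists2 d : R, 0 < d &
    forall y : vec, enorm (y - x) < d ->
      `|f y - f x - dotv g (y - x)| <= e * enorm (y - x).

Definition qmodel (c : R) (g : vec) (H : 'M[R]_n) (x y : vec) : R :=
  c + dotv g (y - x) + 2^-1 * dotv (y - x) (H *m (y - x)).

(* its gradient at y (H symmetric) *)
Definition qmodel_grad (g : vec) (H : 'M[R]_n) (x y : vec) : vec :=
  g + H *m (y - x).

Definition fully_linear (f : vec -> R) (gradf : vec -> vec) (kmf kmg : R)
  (c : R) (g : vec) (H : 'M[R]_n) (x : vec) (D : R) : Prop :=
  forall y : vec, enorm (y - x) <= D ->
    `|qmodel c g H x y - f y| <= kmf * D ^+ 2 /\
    enorm (qmodel_grad g H x y - gradf y) <= kmg * D.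

Definition tr_rho (f : vec -> R) (c : R) (g : vec) (H : 'M[R]_n) (x s : vec) : R :=
  (f x - f (x + s)) / (qmodel c g H x x - qmodel c g H x (x + s)).

Definition tr_update (f : vec -> R) (gdec ginc etaU etaS muc : R)
  (c : R) (g : vec) (H : 'M[R]_n) (x s : vec) (D : R) (x' : vec) (D' : R) : Prop :=
  let rho := tr_rho f c g H x s in
  (etaS <= rho /\ muc * D <= enorm g -> x' = x + s /\ D' = ginc * D) /\
  (etaU <= rho < etaS /\ muc * D <= enorm g -> x' = x + s /\ D' = D) /\
  (~ (etaU <= rho /\ muc * D <= enorm g) -> x' = x /\ D' = gdec * D).

Definition Delta_min (D0 gdec kmf kmg kH ks etaS muc eps : R) : R :=
  Num.min D0
   (Num.min (gdec * eps /
               (Num.max (2 * kmf / (ks * (1 - etaS))) (Num.max kH muc) + kmg))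
            (eps / ((1 + kmg / muc) * kH))).

End TR.

(* Main.v *)
Require Import Defs.
From HB Require Import structures.
From mathcomp Require Import all_boot all_order all_algebra.
From mathcomp Require Import all_classical all_reals all_analysis.
From mathcomp Require Import ring lra.
Import Order.TTheory GRing.Theory Num.Theory.
Local Open Scope ring_scope.

Lemma dotvE {R : realType} {n : nat} (u v : 'cV[R]_n) :
  dotv u v = \sum_i u i 0 * v i 0.
Proof. by rewrite /dotv mxE; apply: eq_bigr => i _; rewrite mxE. Qed.

Lemma dotv_ge0 {R : realType} {n : nat} (u : 'cV[R]_n) : 0 <= dotv u u.
Proof. by rewrite dotvE; apply: sumr_ge0 => i _; rewrite -expr2 sqr_ge0. Qed.

Lemma enorm_ge0 {R : realType} {n : nat} (u : 'cV[R]_n) : 0 <= enorm u.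
Proof. exact: sqrtr_ge0. Qed.

Lemma enorm0 (R : realType) (n : nat) : enorm (0 : 'cV[R]_n) = 0.
Proof. rewrite /enorm dotvE big1 ?sqrtr0 // => i _; by rewrite mxE mul0r. Qed.

Lemma enormN {R : realType} {n : nat} (u : 'cV[R]_n) : enorm (- u) = enorm u.
Proof.
by rewrite /enorm !dotvE; congr Num.sqrt; apply: eq_bigr => i _; rewrite !mxE mulrNN.
Qed.

Lemma dotv_CS {R : realType} {n : nat} (u v : 'cV[R]_n) :
  dotv u v ^+ 2 <= dotv u u * dotv v v.
Proof.
rewrite !dotvE.
set A := \sum_i u i 0 * u i 0; set B := \sum_i u i 0 * v i 0;
set C := \sum_i v i 0 * v i 0.
have A0 : 0 <= A by apply: sumr_ge0 => i _; rewrite -expr2 sqr_ge0.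
have key : 0 <= A * (A * C - B ^+ 2).
  have -> : A * (A * C - B ^+ 2) = \sum_i (B * u i 0 - A * v i 0) ^+ 2.
    transitivity (\sum_i (B ^+ 2 * (u i 0 * u i 0) - (2 * A * B) * (u i 0 * v i 0)
                   + A ^+ 2 * (v i 0 * v i 0))); last first.
      by apply: eq_bigr => i _; ring.
    rewrite big_split /= sumrB -!mulr_sumr -/A -/B -/C; ring.
  by apply: sumr_ge0 => i _; rewrite sqr_ge0.
have [Ap|A0'] := ltP 0 A.
  by rewrite -subr_ge0; rewrite pmulr_rge0 // in key.
have AE : A = 0 by apply/eqP; rewrite eq_le A0' A0.
have ui : forall i, u i 0 = 0.
  move=> i.
  have h0 : forall i, xpredT i -> 0 <= u i 0 * u i 0 by move=> j _; rewrite -expr2 sqr_ge0.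
  have := psumr_eq0P h0 AE; move=> /(_ i isT) h.
  by apply/eqP; move: h => /eqP; rewrite mulf_eq0 orbb.
have -> : B = 0 by rewrite /B big1 // => i _; rewrite ui mul0r.
by rewrite AE !mul0r expr0n.
Qed.

Lemma enormD {R : realType} {n : nat} (u v : 'cV[R]_n) :
  enorm (u + v) <= enorm u + enorm v.
Proof.
have Nu := enorm_ge0 u; have Nv := enorm_ge0 v.
have E : dotv (u + v) (u + v) = dotv u u + 2 * dotv u v + dotv v v.
  rewrite !dotvE mulr_sumr -!big_split /=; apply: eq_bigr => i _; rewrite !mxE; ring.
have CS : dotv u v <= enorm u * enorm v.
  rewrite /enorm -sqrtrM ?dotv_ge0 //; apply: (le_trans (ler_norm _)).
  by rewrite -sqrtr_sqr ler_sqrt ?dotv_CS // mulr_ge0 ?dotv_ge0.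
rewrite -[enorm u + enorm v]ger0_norm ?addr_ge0 // -sqrtr_sqr /enorm ler_sqrt ?sqr_ge0 //.
rewrite E sqrrD !sqr_sqrtr ?dotv_ge0 //.
rewrite -/(enorm u) -/(enorm v); lra.
Qed.

Lemma opnorm_ge0 {R : realType} {n : nat} (A : 'M[R]_n) : 0 <= opnorm A.
Proof.
rewrite /opnorm; set E := (X in sup X).
case: (pselect (has_sup E)) => hs; last by rewrite sup_out.
apply: le_trans (sup_upper_bound hs _); first exact: (enorm_ge0 (A *m 0)).
by exists 0; rewrite // /= enorm0 ler01.
Qed.

Lemma upd_cases {R : realType} {n : nat} {f : 'cV[R]_n -> R} {gdec ginc etaU etaS muc
  c : R} {g : 'cV[R]_n} {H : 'M[R]_n} {x s : 'cV[R]_n} {D : R} {x' : 'cV[R]_n} {D' : R} :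
  etaU <= etaS ->
  tr_update f gdec ginc etaU etaS muc c g H x s D x' D' ->
  (etaU <= tr_rho f c g H x s /\ muc * D <= enorm g /\ x' = x + s /\
     (D' = ginc * D \/ D' = D) /\ (etaS <= tr_rho f c g H x s -> D' = ginc * D))
  \/ (~ (etaU <= tr_rho f c g H x s /\ muc * D <= enorm g) /\ x' = x /\ D' = gdec * D).
Proof.
move=> hUS [h1 [h2 h3]].
case: (pselect (etaU <= tr_rho f c g H x s /\ muc * D <= enorm g)) => [[hU hm]|hn];
  last by right; split => //; exact: h3.
left; do 2 split => //.
have [hS|hS] := leP etaS (tr_rho f c g H x s).
  by have [-> ->] := h1 (conj hS hm); split => //; split; [left|].
have [-> ->] := h2 (conj (introT andP (conj hU hS)) hm).
by split=> //; split; [right|].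
Qed.

Theorem theorem4p7 (R : realType) (n : nat)
  (f : 'cV[R]_n -> R) (gradf : 'cV[R]_n -> 'cV[R]_n) (flow Lg : R)
  (gdec ginc etaU etaS muc kmf kmg kH ks eps : R)
  (x : nat -> 'cV[R]_n) (Delta : nat -> R)
  (c : nat -> R) (g : nat -> 'cV[R]_n) (H : nat -> 'M[R]_n) (s : nat -> 'cV[R]_n)
  (K : nat) :
  (forall y, flow <= f y) ->
  (forall y, is_gradient f y (gradf y)) ->
  (forall y z, enorm (gradf y - gradf z) <= Lg * enorm (y - z)) ->
  0 < gdec < 1 -> 1 < ginc ->
  0 < etaU -> etaU <= etaS -> etaS < 1 -> 0 < muc ->
  0 < Delta 0%N ->
  0 < kmf -> 0 < kmg -> 1 <= kH ->
  (forall k, (H k)^T = H k) ->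
  (forall k, fully_linear f gradf kmf kmg (c k) (g k) (H k) (x k) (Delta k)) ->
  (forall k, opnorm (H k) <= kH - 1) ->
  0 < ks < 2^-1 ->
  (forall k, enorm (s k) <= Delta k) ->
  (forall k, qmodel (c k) (g k) (H k) (x k) (x k)
               - qmodel (c k) (g k) (H k) (x k) (x k + s k)
             >= ks * enorm (g k) *
                Num.min (Delta k) (enorm (g k) / (opnorm (H k) + 1))) ->
  (forall k, tr_update f gdec ginc etaU etaS muc (c k) (g k) (H k) (x k) (s k)
               (Delta k) (x k.+1) (Delta k.+1)) ->
  0 < eps ->
  (forall k, (k < K)%N -> eps <= enorm (gradf (x k))) ->
  let Dmin := Delta_min (Delta 0%N) gdec kmf kmg kH ks etaS muc eps in
  K%:R <= ln (Delta 0%N / Dmin) / ln (gdec^-1)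
          + (1 + ln ginc / ln (gdec^-1)) *
            ((1 + kmg / muc) * (f (x 0%N) - flow) / (etaU * ks * eps * Dmin)).
Proof.
move=> Hlow _ _ /andP[gd0 gd1] ginc1 etaU0 etaUS etaS1 muc0 D0 kmf0 kmg0 kH1 _ FL Hop.
move=> /andP[ks0 ks2] Hs Hpred Hupd eps0 Hgrad.
cbv zeta; set Dmin := Delta_min (Delta 0%N) gdec kmf kmg kH ks etaS muc eps.
pose pr k := qmodel (c k) (g k) (H k) (x k) (x k)
               - qmodel (c k) (g k) (H k) (x k) (x k + s k).
pose rho k := tr_rho f (c k) (g k) (H k) (x k) (s k).
have kH0 : 0 < kH by apply: lt_le_trans kH1.
have ginc0 : 0 < ginc by apply: lt_trans ginc1.
have opge0 : forall k, 0 <= opnorm (H k) by move=> k; exact: opnorm_ge0.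
have op1 : forall k, 0 < opnorm (H k) + 1 by move=> k; have := opge0 k; lra.
have opkH : forall k, opnorm (H k) + 1 <= kH by move=> k; have := Hop k; lra.
have Dpos : forall k, 0 < Delta k.
  elim=> // k IH; case: (upd_cases etaUS (Hupd k)).
    by move=> [_ [_ [_ [[->|->] _]]]] //; rewrite mulr_gt0.
  by move=> [_ [_ ->]]; rewrite mulr_gt0.
have FLx : forall k, `|qmodel (c k) (g k) (H k) (x k) (x k) - f (x k)| <= kmf * Delta k ^+ 2
    /\ enorm (g k - gradf (x k)) <= kmg * Delta k.
  move=> k; have [|h1 h2] := FL k (x k); first by rewrite subrr enorm0 (ltW (Dpos k)).
  by split=> //; move: h2; rewrite /qmodel_grad subrr mulmx0 addr0.
have FLs : forall k, `|qmodel (c k) (g k) (H k) (x k) (x k + s k) - f (x k + s k)|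
    <= kmf * Delta k ^+ 2.
  by move=> k; have [] := FL k (x k + s k); first by rewrite (addrC (x k)) addrK; exact: Hs.
have gradb : forall k, enorm (gradf (x k)) <= enorm (g k) + kmg * Delta k.
  move=> k; have e : gradf (x k) = g k + - (g k - gradf (x k)) by rewrite opprB addrC subrK.
  rewrite {1}e; apply: le_trans (enormD _ _) _; rewrite enormN lerD2l; exact: (FLx k).2.
pose M := Num.max (2 * kmf / (ks * (1 - etaS))) (Num.max kH muc).
have Mc1 : 2 * kmf / (ks * (1 - etaS)) <= M by rewrite le_max lexx.
have MkH : kH <= M by rewrite le_max le_max lexx orbT.
have Mmuc : muc <= M by rewrite le_max le_max lexx !orbT.
have M0 : 0 < M by apply: lt_le_trans MkH.
have LA : forall k, (k < K)%N -> Delta k * (M + kmg) <= eps ->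
    etaS <= rho k /\ muc * Delta k <= enorm (g k).
  move=> k kK hD.
  have Dk := Dpos k; set D := Delta k in Dk hD *; set G := enorm (g k).
  have hG : M * D <= G.
    have := gradb k; have := Hgrad k kK; rewrite -/D -/G; nra.
  have hmuc : muc * D <= G by apply: le_trans hG; rewrite ler_pM2r.
  split=> //.
  have hmin : D <= Num.min D (G / (opnorm (H k) + 1)).
    rewrite le_min lexx /= ler_pdivlMr //; apply: le_trans hG.
    by rewrite mulrC ler_pM2r //; apply: le_trans MkH.
  have hpr : ks * G * D <= pr k.
    apply: le_trans (Hpred k); rewrite ler_wpM2l // mulr_ge0 //; first exact: ltW.
    exact: enorm_ge0.
  have c1D : 2 * kmf / (ks * (1 - etaS)) * D <= G.
    by apply: le_trans hG; rewrite ler_pM2r.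
  have eS : 0 < 1 - etaS by lra.
  have hpr2 : 2 * kmf * D ^+ 2 <= (1 - etaS) * pr k.
    have e1 : 2 * kmf * D ^+ 2 = (1 - etaS) * (ks * (2 * kmf / (ks * (1 - etaS)) * D) * D).
      field; apply/andP; split; apply: lt0r_neq0 => //.
    rewrite e1 ler_pM2l //; apply: le_trans hpr.
    by rewrite ler_pM2r // ler_pM2l.
  have pr0 : 0 < pr k.
    have : 0 < (1 - etaS) * pr k.
      by apply: lt_le_trans hpr2; rewrite !mulr_gt0 // exprn_gt0.
    by rewrite pmulr_rgt0.
  rewrite /rho /tr_rho -/(pr k) ler_pdivlMr //.
  have [/ler_normlP [a1 a2] _] := FLx k; move/ler_normlP: (FLs k) => [b1 b2].
  rewrite -/D in a1 a2 b1 b2.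
  have eq : pr k = qmodel (c k) (g k) (H k) (x k) (x k)
               - qmodel (c k) (g k) (H k) (x k) (x k + s k) by [].
  lra.
pose D1 := Num.min (Delta 0%N) (gdec * eps / (M + kmg)).
have Mk0 : 0 < M + kmg by rewrite addr_gt0.
have LB : forall k, (k <= K)%N -> D1 <= Delta k.
  elim=> [_|k IH kK]; first by rewrite /D1 ge_min lexx.
  have kK' : (k < K)%N by [].
  have {}IH := IH (ltnW kK').
  have [hD|hD] := lerP (Delta k * (M + kmg)) eps.
    have [hS hm] := LA k kK' hD.
    case: (upd_cases etaUS (Hupd k)).
      move=> [_ [_ [_ [_ h]]]]; rewrite (h hS); apply: le_trans IH _.
      by rewrite ler_peMl // ?(ltW (Dpos k)) // ltW.
    by move=> [hn _]; exfalso; apply: hn; split=> //; apply: le_trans hS.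
  have h1 : gdec * eps / (M + kmg) <= gdec * Delta k.
    by rewrite ler_pdivrMr // -mulrA ler_pM2l // ltW.
  have h2 : gdec * Delta k <= Delta (k.+1).
    have Dk := Dpos k.
    case: (upd_cases etaUS (Hupd k)).
      move=> [_ [_ [_ [[->|->] _]]]]; nra.
    by move=> [_ [_ ->]].
  by rewrite /D1 ge_min; apply/orP; right; apply: le_trans h1 h2.
have DminD1 : Dmin <= D1.
  by rewrite /Dmin /Delta_min /D1 -/M le_min !ge_min !lexx !orbT.
have DminY : Dmin <= eps / ((1 + kmg / muc) * kH).
  by rewrite /Dmin /Delta_min !ge_min lexx !orbT.
have P0 : 0 < 1 + kmg / muc by rewrite addr_gt0 // divr_gt0.
have Dmin0 : 0 < Dmin.
  by rewrite /Dmin /Delta_min !lt_min D0 /= !divr_gt0 ?mulr_gt0.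
pose P := 1 + kmg / muc.
pose del := etaU * ks * eps * Dmin / P.
have del0 : 0 < del by rewrite /del !divr_gt0 ?mulr_gt0.
have LC : forall k, (k < K)%N -> etaU <= rho k -> muc * Delta k <= enorm (g k) ->
    del <= f (x k) - f (x k + s k).
  move=> k kK hU hm.
  have Dk := Dpos k; set D := Delta k in Dk hm *; set G := enorm (g k) in hm *.
  have G0 : 0 < G by apply: lt_le_trans hm; rewrite mulr_gt0.
  have hDG : D <= G / muc by rewrite ler_pdivlMr // mulrC.
  have epsG : eps <= G * P.
    have := gradb k; have := Hgrad k kK; rewrite -/D -/G => h1 h2.
    apply: le_trans (le_trans h1 h2) _.
    by rewrite /P mulrDr mulr1 lerD2l mulrCA ler_pM2l.
  have hmin : Dmin <= Num.min D (G / (opnorm (H k) + 1)).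
    rewrite le_min; apply/andP; split.
      apply: le_trans DminD1 _; apply: LB; exact: ltnW.
    apply: le_trans DminY _.
    apply: (@le_trans _ _ (G / kH)).
      rewrite ler_pdivrMr ?mulr_gt0 //.
      have -> : G / kH * (P * kH) = G * P by field; exact: lt0r_neq0.
      exact: epsG.
    rewrite ler_pdivlMr //; apply: (@le_trans _ _ (G / kH * kH)).
      by rewrite ler_pM2l ?divr_gt0.
    by rewrite mulfVK ?lt0r_neq0.
  have hpr : ks * (eps / P) * Dmin <= pr k.
    apply: le_trans (Hpred k); apply: ler_pM => //.
    - by rewrite mulr_ge0 ?divr_ge0 // ltW.
    - exact: ltW.
    - by rewrite ler_pM2l // ler_pdivrMr.
  have pr0 : 0 < pr k.
    by apply: lt_le_trans hpr; rewrite !mulr_gt0 // ?divr_gt0 // invr_gt0.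
  move: hU; rewrite /rho /tr_rho -/(pr k) ler_pdivlMr // => hU.
  apply: le_trans hU; rewrite /del.
  have -> : etaU * ks * eps * Dmin / P = etaU * (ks * (eps / P) * Dmin) by rewrite !mulrA mulrAC.
  by rewrite ler_pM2l.
have CNT : forall k, (k <= K)%N -> exists S U : nat, (S + U = k)%N /\
    Delta k <= Delta 0%N * ginc ^+ S * gdec ^+ U /\ S%:R * del <= f (x 0%N) - f (x k).
  elim=> [_|k IH kK]; first by exists 0%N, 0%N; rewrite !expr0 !mulr1 mul0r subrr.
  have kK' : (k < K)%N by [].
  have [S [U [eSU [hD hf]]]] := IH (ltnW kK').
  have Dk := Dpos k.
  case: (upd_cases etaUS (Hupd k)).
    move=> [hU [hm [-> [hD' _]]]].
    exists S.+1, U; split; first by rewrite addSn eSU.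
    split.
      have : Delta k.+1 <= ginc * Delta k by case: hD' => ->; [|rewrite ler_peMl // ltW].
      move=> h; apply: le_trans h _; rewrite exprS.
      have -> : Delta 0%N * (ginc * ginc ^+ S) * gdec ^+ U
              = ginc * (Delta 0%N * ginc ^+ S * gdec ^+ U) by ring.
      by rewrite ler_pM2l.
    have := LC k kK' hU hm; rewrite -natr1 mulrDl mul1r; lra.
  move=> [_ [-> ->]]; exists S, U.+1; split; first by rewrite addnS eSU.
  split=> //; rewrite exprS.
  have -> : Delta 0%N * ginc ^+ S * (gdec * gdec ^+ U)
          = gdec * (Delta 0%N * ginc ^+ S * gdec ^+ U) by ring.
  by rewrite ler_pM2l.
have [S [U [eSU [hD hf]]]] := CNT K (leqnn K).
pose B := (1 + kmg / muc) * (f (x 0%N) - flow) / (etaU * ks * eps * Dmin).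
have hSB : S%:R <= B.
  have h1 : S%:R * del <= f (x 0%N) - flow by apply: le_trans hf _; have := Hlow (x K); lra.
  have -> : B = (f (x 0%N) - flow) / del.
    rewrite /B /del -/P; field.
    by rewrite !lt0r_neq0 ?mulr_gt0.
  by rewrite ler_pdivlMr.
have prod0 : 0 < Delta 0%N * ginc ^+ S * gdec ^+ U by rewrite !mulr_gt0 // exprn_gt0.
have hln : ln Dmin <= ln (Delta 0%N) + S%:R * ln ginc + U%:R * ln gdec.
  have h : Dmin <= Delta 0%N * ginc ^+ S * gdec ^+ U.
    by apply: le_trans DminD1 (le_trans (LB K (leqnn K)) hD).
  rewrite -ler_ln ?posrE // in h; apply: le_trans h _.
  by rewrite !lnM ?posrE ?mulr_gt0 ?exprn_gt0 // !lnXn // !mulr_natl.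
have L0 : 0 < - ln gdec by rewrite oppr_gt0 ln_lt0 // gd0 gd1.
have lg0 : 0 <= ln ginc by apply: ln_ge0; apply: ltW.
rewrite -/B lnM ?posrE ?invr_gt0 // !lnV ?posrE // -eSU natrD.
set L := - ln gdec in L0 *; set a := ln (Delta 0%N) + - ln Dmin; set lg := ln ginc in lg0 hln *.
have e : a / L + (1 + lg / L) * S%:R = S%:R + (a + lg * S%:R) / L.
  by rewrite /a; field; exact: lt0r_neq0.
have hU : U%:R <= (a + lg * S%:R) / L.
  rewrite ler_pdivlMr // /a /L; lra.
have hB : (1 + lg / L) * S%:R <= (1 + lg / L) * B.
  by rewrite ler_wpM2l // addr_ge0 // divr_ge0 // ltW.
lra.
Qed.
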